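(* Let $A$ be an integer matrix with columns $a_1,\dots,a_r$ and $A'$ an integer matrix with columns $a'_1,\dots,a'_s$, and let $I_A\subseteq\mathbb{K}[x_1,\dots,x_r]$ and $I_{A'}\subseteq\mathbb{K}[y_1,\dots,y_s]$ be their toric ideals. Let $Q\subseteq[r]\times[s]$. Then $I_A\times_QI_{A'}$ is the toric ideal of the matrix $A\times_QA'$ whose columns are all vectors $(a_j,a'_k)^T$ with $(j,k)\in Q$ (the column indexed by $(j,k)$ corresponding to the variable $z_{jk}$).
   Context: The toric ideal of an integer matrix $A$ with columns $a_1,\dots,a_r$ is the kernel of the monomial map $x_j\mapsto t^{a_j}$ (Laurent monomial with exponent vector $a_j$). For $Q\subseteq[r]\times[s]$, $\phi_Q:\mathbb{K}[z_{jk}:(j,k)\in Q]\to\mathbb{K}[x,y]$ is $z_{jk}\mapsto x_jy_k$, and the quasi-independence gluing of ideals $I\subseteq\mathbb{K}[x]$, $J\subseteq\mathbb{K}[y]$ is $I\times_QJ:=\phi_Q^{-1}(I+J)$. *)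

(* Defs.v *)
From HB Require Import structures.
From mathcomp Require Import all_boot all_order all_algebra.
From mathcomp Require Import mpoly.
Set Implicit Arguments. Unset Strict Implicit. Unset Printing Implicit Defensive.
Import Order.TTheory GRing.Theory Num.Theory.
Local Open Scope ring_scope.

Definition mcol (n : nat) (m : 'X_{1..n}) : 'cV[int]_n := \col_j ((m j)%:Z).

(* Monomial map x_j |-> t^{a_j} (a_j = column j of A) into the Laurent
   polynomial ring K[t_1^{+-1},...,t_d^{+-1}], the latter represented as the
   group algebra K[Z^d], i.e. finitely supported functions Z^d -> K:
   the coefficient of t^b in the image of p. *)
Definition monomial_image (K : fieldType) (d n : nat) (A : 'M[int]_(d, n))
  (p : {mpoly K[n]}) (b : 'cV[int]_d) : K :=
  \sum_(m <- msupp p | A *m mcol m == b) p@_m.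

Definition toric_ideal (K : fieldType) (d n : nat) (A : 'M[int]_(d, n))
  (p : {mpoly K[n]}) : Prop :=
  forall b : 'cV[int]_d, monomial_image A p b = 0.

(* Inclusions K[x] -> K[x,y] and K[y] -> K[x,y], with K[x,y] = K[x_1..x_r,y_1..y_s]
   realised as {mpoly K[r + s]}: x_j = 'X_(lshift s j), y_k = 'X_(rshift r k). *)
Definition incl_x (K : fieldType) (r s : nat) (p : {mpoly K[r]}) : {mpoly K[r + s]} :=
  p \mPo [tuple 'X_(lshift s j) | j < r].
Definition incl_y (K : fieldType) (r s : nat) (p : {mpoly K[s]}) : {mpoly K[r + s]} :=
  p \mPo [tuple 'X_(rshift r k) | k < s].

Definition ideal_sum (K : fieldType) (r s : nat)
  (I : {mpoly K[r]} -> Prop) (J : {mpoly K[s]} -> Prop) (p : {mpoly K[r + s]}) : Prop :=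
  exists (n1 n2 : nat) (f : 'I_n1 -> {mpoly K[r]}) (g : 'I_n1 -> {mpoly K[r + s]})
         (e : 'I_n2 -> {mpoly K[s]}) (h : 'I_n2 -> {mpoly K[r + s]}),
    (forall i, I (f i)) /\ (forall i, J (e i)) /\
    p = \sum_(i < n1) g i * incl_x s (f i) + \sum_(i < n2) h i * incl_y r (e i).

(* The variables z_{jk}, (j,k) \in Q, are indexed by 'I_#|Q| via enum_val. *)
Definition phiQ (K : fieldType) (r s : nat) (Q : {set 'I_r * 'I_s})
  (p : {mpoly K[#|Q|]}) : {mpoly K[r + s]} :=
  p \mPo [tuple 'X_(lshift s (enum_val q).1) * 'X_(rshift r (enum_val q).2) | q < #|Q|].

(* Quasi-independence gluing I \times_Q J := phi_Q^{-1}(I + J). *)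
Definition qi_glue (K : fieldType) (r s : nat)
  (I : {mpoly K[r]} -> Prop) (Q : {set 'I_r * 'I_s}) (J : {mpoly K[s]} -> Prop)
  (p : {mpoly K[#|Q|]}) : Prop :=
  ideal_sum I J (@phiQ K r s Q p).

Definition glue_mx (d d' r s : nat) (A : 'M[int]_(d, r)) (Q : {set 'I_r * 'I_s})
  (A' : 'M[int]_(d', s)) : 'M[int]_(d + d', #|Q|) :=
  col_mx (\matrix_(i < d, q < #|Q|) A i (enum_val q).1)
         (\matrix_(i < d', q < #|Q|) A' i (enum_val q).2).

(* Main.v *)
Require Import Defs.
From HB Require Import structures.
From mathcomp Require Import all_boot all_order all_algebra.
From mathcomp Require Import mpoly.
Local Open Scope ring_scope.

Module Helpers.
Set Implicit Arguments. Unset Strict Implicit. Unset Printing Implicit Defensive.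
Import Order.TTheory GRing.Theory Num.Theory.

Section Lw.
Variables (K : fieldType) (n : nat) (w : 'X_{1..n} -> K).

Definition Lw (p : {mpoly K[n]}) : K := \sum_(m <- msupp p) p@_m * w m.

Lemma Lw_on (s : seq 'X_{1..n}) p : uniq s -> {subset msupp p <= s} ->
  Lw p = \sum_(m <- s) p@_m * w m.
Proof.
move=> us sub; rewrite (bigID (mem (msupp p))) /=.
rewrite [X in _ + X]big1 ?addr0; last first.
  by move=> m; rewrite mcoeff_msupp negbK => /eqP ->; rewrite mul0r.
rewrite -big_filter /Lw; apply: perm_big.
apply: uniq_perm; first exact: msupp_uniq; first exact: filter_uniq.
by move=> m; rewrite mem_filter; case H: (m \in msupp p); rewrite ?(sub _ H).
Qed.

Lemma LwD p q : Lw (p + q) = Lw p + Lw q.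
Proof.
pose s := undup (msupp p ++ msupp q).
have us : uniq s by apply: undup_uniq.
rewrite (@Lw_on s p) // ?(@Lw_on s q) // ?(@Lw_on s (p + q)) //.
- by rewrite -big_split /=; apply: eq_bigr => m _; rewrite mcoeffD mulrDl.
- by move=> m /msuppD_le; rewrite mem_undup.
- by move=> m H; rewrite mem_undup mem_cat H orbT.
- by move=> m H; rewrite mem_undup mem_cat H.
Qed.

Lemma Lw0 : Lw 0 = 0.
Proof. by rewrite /Lw msupp0 big_nil. Qed.

Lemma LwZ c p : Lw (c *: p) = c * Lw p.
Proof.
rewrite (@Lw_on (msupp p) (c *: p)) ?msupp_uniq //; last exact: msuppZ_le.
by rewrite /Lw mulr_sumr; apply: eq_bigr => m _; rewrite mcoeffZ mulrA.
Qed.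

Lemma LwN p : Lw (- p) = - Lw p.
Proof. by rewrite -scaleN1r LwZ mulN1r. Qed.

Lemma LwB p q : Lw (p - q) = Lw p - Lw q.
Proof. by rewrite LwD LwN. Qed.

Lemma LwX m : Lw 'X_[m] = w m.
Proof. by rewrite /Lw msuppX big_seq1 mcoeffX eqxx mul1r. Qed.

Lemma Lw_sum (I : Type) (t : seq I) (P : pred I) (F : I -> {mpoly K[n]}) :
  Lw (\sum_(i <- t | P i) F i) = \sum_(i <- t | P i) Lw (F i).
Proof. exact: (big_morph Lw LwD Lw0). Qed.

Lemma Lw_lin (I : Type) (t : seq I) (c : I -> K) (F : I -> 'X_{1..n}) :
  Lw (\sum_(i <- t) c i *: 'X_[F i]) = \sum_(i <- t) c i * w (F i).
Proof. by rewrite Lw_sum; apply: eq_bigr => i _; rewrite LwZ LwX. Qed.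

Lemma Lw_mul (I : Type) (t : seq I) (c : I -> K) (F : I -> 'X_{1..n}) g :
  Lw (g * \sum_(i <- t) c i *: 'X_[F i]) =
  \sum_(m <- msupp g) \sum_(i <- t) g@_m * c i * w (m + F i)%MM.
Proof.
rewrite {1}(mpolyE g) big_distrl Lw_sum; apply: eq_bigr => m _.
rewrite big_distrr Lw_sum; apply: eq_bigr => i _ /=.
by rewrite -scalerAl -scalerAr -mpolyXD !LwZ LwX mulrA.
Qed.

End Lw.
Lemma comp_monE (K : fieldType) (k n : nat) (lq : n.-tuple {mpoly K[k]})
  (F : 'I_n -> 'X_{1..k}) : (forall j, tnth lq j = 'X_[F j]) ->
  forall p : {mpoly K[n]},
  p \mPo lq = \sum_(m <- msupp p) p@_m *: 'X_[\sum_(j < n) F j *+ m j]%MM.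
Proof.
move=> H p; rewrite comp_mpolyE; apply: eq_bigr => m _; congr (_ *: _).
by rewrite -mprodXnE; apply: eq_bigr => j _; rewrite H.
Qed.

Section Mon.
Variables (r s N : nat) (e : 'I_N -> 'I_r * 'I_s).

Definition ix (m : 'X_{1..r}) : 'X_{1..r+s} := (\sum_(j < r) U_(lshift s j) *+ m j)%MM.
Definition iy (m : 'X_{1..s}) : 'X_{1..r+s} := (\sum_(k < s) U_(rshift r k) *+ m k)%MM.
Definition Phi (n : 'X_{1..N}) : 'X_{1..r+s} :=
  (\sum_(q < N) (U_(lshift s (e q).1) + U_(rshift r (e q).2)) *+ n q)%MM.
Definition mx (m : 'X_{1..r+s}) : 'X_{1..r} := [multinom m (lshift s j) | j < r].
Definition my (m : 'X_{1..r+s}) : 'X_{1..s} := [multinom m (rshift r k) | k < s].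

Lemma ix_l m j : ix m (lshift s j) = m j.
Proof.
rewrite /ix mnm_sumE (bigD1 j) //= big1 => [|i ne]; last first.
  by rewrite mulmnE mnm1E eq_lshift (negbTE ne) /= mul0n.
by rewrite mulmnE mnm1E eqxx addn0 mul1n.
Qed.
Lemma ix_r m k : ix m (rshift r k) = 0%N.
Proof. by rewrite /ix mnm_sumE big1 // => i _; rewrite mulmnE mnm1E eq_lrshift /= mul0n. Qed.
Lemma iy_r m k : iy m (rshift r k) = m k.
Proof.
rewrite /iy mnm_sumE (bigD1 k) //= big1 => [|i ne]; last first.
  by rewrite mulmnE mnm1E eq_rshift (negbTE ne) /= mul0n.
by rewrite mulmnE mnm1E eqxx addn0 mul1n.
Qed.
Lemma iy_l m j : iy m (lshift s j) = 0%N.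
Proof. by rewrite /iy mnm_sumE big1 // => i _; rewrite mulmnE mnm1E eq_rlshift /= mul0n. Qed.

Lemma Phi_l n j : Phi n (lshift s j) = (\sum_(q < N) n q * ((e q).1 == j))%N.
Proof.
rewrite /Phi mnm_sumE; apply: eq_bigr => q _.
by rewrite mulmnE mnmDE !mnm1E eq_lshift eq_rlshift addn0 mulnC.
Qed.
Lemma Phi_r n k : Phi n (rshift r k) = (\sum_(q < N) n q * ((e q).2 == k))%N.
Proof.
rewrite /Phi mnm_sumE; apply: eq_bigr => q _.
by rewrite mulmnE mnmDE !mnm1E eq_rshift eq_lrshift add0n mulnC.
Qed.

Lemma mxyE m : m = (ix (mx m) + iy (my m))%MM.
Proof.
apply/mnmP => i; rewrite mnmDE; case: (split_ordP i) => j ->.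
  by rewrite ix_l iy_l addn0 /mx mnmE.
by rewrite ix_r iy_r add0n /my mnmE.
Qed.
End Mon.
Section Ideal.
Variables (K : fieldType) (r s : nat) (I : {mpoly K[r]} -> Prop) (J : {mpoly K[s]} -> Prop).

Lemma ideal0 : ideal_sum I J 0.
Proof.
exists 0%N, 0%N, (fun _ => 0), (fun _ => 0), (fun _ => 0), (fun _ => 0).
by split; [case|split; [case|rewrite !big_ord0 addr0]].
Qed.

Lemma lsplitE n1 n2 (i : 'I_n1) : split (lshift n2 i) = inl i.
Proof. exact: (unsplitK (inl _ i)). Qed.
Lemma rsplitE n1 n2 (i : 'I_n2) : split (rshift n1 i) = inr i.
Proof. exact: (unsplitK (inr _ i)). Qed.

Lemma sum_split (V : nmodType) n1 n2 (F : 'I_n1 -> V) (G : 'I_n2 -> V) :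
  \sum_(i < n1 + n2) (match split i with inl a => F a | inr b => G b end) =
  \sum_(i < n1) F i + \sum_(i < n2) G i.
Proof.
rewrite big_split_ord; congr (_ + _); apply: eq_bigr => i _.
  by rewrite lsplitE. by rewrite rsplitE.
Qed.

Lemma idealD p q : ideal_sum I J p -> ideal_sum I J q -> ideal_sum I J (p + q).
Proof.
move=> [n1 [n2 [f [g [e [h [If [Je ->]]]]]]]].
move=> [n1' [n2' [f' [g' [e' [h' [If' [Je' ->]]]]]]]].
exists (n1 + n1')%N, (n2 + n2')%N.
exists (fun i => match split i with inl a => f a | inr b => f' b end).
exists (fun i => match split i with inl a => g a | inr b => g' b end).
exists (fun i => match split i with inl a => e a | inr b => e' b end).
exists (fun i => match split i with inl a => h a | inr b => h' b end).
split; first by move=> i; case: (split i).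
split; first by move=> i; case: (split i).
rewrite (eq_bigr (fun i => match split i with inl a => g a * incl_x s (f a)
   | inr b => g' b * incl_x s (f' b) end)); last by move=> i _; case: (split i).
rewrite [X in _ = _ + X](eq_bigr (fun i => match split i with inl a => h a * incl_y r (e a)
   | inr b => h' b * incl_y r (e' b) end)); last by move=> i _; case: (split i).
rewrite !sum_split.
by rewrite -!addrA; congr (_ + _); rewrite addrC -!addrA; congr (_ + _); rewrite addrC.
Qed.

Lemma ideal_x g f : I f -> ideal_sum I J (g * incl_x s f).
Proof.
move=> If; exists 1%N, 0%N, (fun _ => f), (fun _ => g), (fun _ => 0), (fun _ => 0).
by split=> //; split; [case|rewrite big_ord1 big_ord0 addr0].
Qed.

Lemma ideal_y g f : J f -> ideal_sum I J (g * incl_y r f).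
Proof.
move=> Jf; exists 0%N, 1%N, (fun _ => 0), (fun _ => 0), (fun _ => f), (fun _ => g).
by split; [case|split=> //; rewrite big_ord1 big_ord0 add0r].
Qed.

Lemma ideal_big (T : Type) (t : seq T) (P : pred T) (F : T -> {mpoly K[r + s]}) :
  (forall i, P i -> ideal_sum I J (F i)) -> ideal_sum I J (\sum_(i <- t | P i) F i).
Proof.
move=> H; elim: t => [|a t IH]; first by rewrite big_nil; exact: ideal0.
rewrite big_cons; case: ifP => Pa //; exact: idealD (H _ Pa) IH.
Qed.
End Ideal.
Section Main.
Variables (K : fieldType) (d d' r s : nat).
Variables (A : 'M[int]_(d, r)) (A' : 'M[int]_(d', s)) (Q : {set 'I_r * 'I_s}).

Local Notation e := (fun q : 'I_#|Q| => enum_val q).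
Local Notation mxx := (@mx r s).
Local Notation myy := (@my r s).

Definition wf (b : 'cV[int]_d) (b' : 'cV[int]_d') (m : 'X_{1..r+s}) : K :=
  ((A *m mcol (mxx m) == b) && (A' *m mcol (myy m) == b'))%:R.

Lemma mcolD n (m1 m2 : 'X_{1..n}) : mcol (m1 + m2)%MM = mcol m1 + mcol m2.
Proof. by apply/matrixP => i j; rewrite !mxE mnmDE PoszD. Qed.

Lemma mxD m1 m2 : mxx (m1 + m2)%MM = (mxx m1 + mxx m2)%MM.
Proof. by apply/mnmP => i; rewrite !(mnmE, mnmDE). Qed.
Lemma myD m1 m2 : myy (m1 + m2)%MM = (myy m1 + myy m2)%MM.
Proof. by apply/mnmP => i; rewrite !(mnmE, mnmDE). Qed.
Lemma mx_ix u : mxx (ix s u) = u.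
Proof. by apply/mnmP => i; rewrite mnmE ix_l. Qed.
Lemma my_ix u : myy (ix s u) = 0%MM.
Proof. by apply/mnmP => i; rewrite mnmE ix_r mnm0E. Qed.
Lemma mx_iy u : mxx (iy r u) = 0%MM.
Proof. by apply/mnmP => i; rewrite mnmE iy_l mnm0E. Qed.
Lemma my_iy u : myy (iy r u) = u.
Proof. by apply/mnmP => i; rewrite mnmE iy_r. Qed.
Lemma mcol0 n : mcol (0%MM : 'X_{1..n}) = 0.
Proof. by apply/matrixP => i j; rewrite !mxE mnm0E. Qed.

Lemma incl_xE (f : {mpoly K[r]}) :
  incl_x s f = \sum_(m <- msupp f) f@_m *: 'X_[ix s m].
Proof. by rewrite /incl_x (@comp_monE _ _ _ _ (fun j => (mnm1 (lshift s j)))) // => j; rewrite tnth_mktuple. Qed.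
Lemma incl_yE (f : {mpoly K[s]}) :
  incl_y r f = \sum_(m <- msupp f) f@_m *: 'X_[iy r m].
Proof. by rewrite /incl_y (@comp_monE _ _ _ _ (fun j => (mnm1 (rshift r j)))) // => j; rewrite tnth_mktuple. Qed.

Lemma incl_xX u : incl_x s 'X_[u] = 'X_[ix s u] :> {mpoly K[r + s]}.
Proof. by rewrite incl_xE msuppX big_seq1 mcoeffX eqxx scale1r. Qed.
Lemma incl_yX u : incl_y r 'X_[u] = 'X_[iy r u] :> {mpoly K[r + s]}.
Proof. by rewrite incl_yE msuppX big_seq1 mcoeffX eqxx scale1r. Qed.

Lemma incl_x_sum (T : Type) (t : seq T) (P : pred T) (F : T -> {mpoly K[r]}) :
  incl_x s (\sum_(i <- t | P i) F i) = \sum_(i <- t | P i) incl_x s (F i).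
Proof. by apply: big_morph => [x y|]; rewrite /incl_x ?comp_mpolyD ?comp_mpoly0. Qed.
Lemma incl_yB (f g : {mpoly K[s]}) : incl_y r (f - g) = incl_y r f - incl_y r g.
Proof. by rewrite /incl_y comp_mpolyB. Qed.

Lemma incl_xZ c (f : {mpoly K[r]}) : incl_x s (c *: f) = c *: incl_x s f.
Proof. by rewrite /incl_x comp_mpolyZ. Qed.

Lemma phiQE (p : {mpoly K[#|Q|]}) :
  phiQ p = \sum_(n <- msupp p) p@_n *: 'X_[Phi e n].
Proof.
rewrite /phiQ (@comp_monE _ _ _ _ (fun q => U_(lshift s (e q).1) + U_(rshift r (e q).2))%MM) //.
by move=> j; rewrite tnth_mktuple mpolyXD.
Qed.

Lemma glueE (n : 'X_{1..#|Q|}) :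
  glue_mx A Q A' *m mcol n =
  col_mx (A *m mcol (mxx (Phi e n))) (A' *m mcol (myy (Phi e n))).
Proof.
rewrite /glue_mx mul_col_mx; congr col_mx; apply/matrixP => i k; rewrite !mxE.
- under [RHS]eq_bigr do rewrite !mxE mnmE Phi_l (big_morph Posz PoszD (erefl _)) mulr_sumr.
  rewrite exchange_big /=; apply: eq_bigr => q _; rewrite !mxE.
  rewrite (bigD1 (enum_val q).1) //= eqxx muln1 big1 ?addr0 // => j ne.
  by rewrite eq_sym (negbTE ne) muln0 mulr0.
- under [RHS]eq_bigr do rewrite !mxE mnmE Phi_r (big_morph Posz PoszD (erefl _)) mulr_sumr.
  rewrite exchange_big /=; apply: eq_bigr => q _; rewrite !mxE.
  rewrite (bigD1 (enum_val q).2) //= eqxx muln1 big1 ?addr0 // => j ne.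
  by rewrite eq_sym (negbTE ne) muln0 mulr0.
Qed.


Lemma mimageE dd n (B : 'M[int]_(dd, n)) (p : {mpoly K[n]}) b :
  monomial_image B p b = Lw (fun m => (B *m mcol m == b)%:R) p.
Proof.
rewrite /monomial_image /Lw big_mkcond; apply: eq_bigr => m _.
by case: eqP; rewrite ?mulr1 ?mulr0.
Qed.

Lemma wg_wf b b' (n : 'X_{1..#|Q|}) :
  (glue_mx A Q A' *m mcol n == col_mx b b')%:R = wf b b' (Phi e n) :> K.
Proof.
rewrite glueE /wf.
case: eqP => [/eq_col_mx [-> ->]|H]; first by rewrite !eqxx.
case: eqP => [E1|//]; case: eqP => [E2|//]; by case: H; rewrite E1 E2.
Qed.

Lemma glue_Lw (p : {mpoly K[#|Q|]}) b b' :
  monomial_image (glue_mx A Q A') p (col_mx b b') = Lw (wf b b') (phiQ p).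
Proof.
rewrite mimageE phiQE Lw_lin /Lw; apply: eq_bigr => n _; by rewrite wg_wf.
Qed.

Lemma eq_shift (n : nat) (x y b : 'cV[int]_n) : (y == b - x) = (x + y == b).
Proof. by rewrite eq_sym subr_eq addrC eq_sym. Qed.

Lemma wf_ix b b' m u :
  wf b b' (m + ix s u)%MM =
  (A' *m mcol (myy m) == b')%:R * (A *m mcol u == b - A *m mcol (mxx m))%:R.
Proof.
rewrite /wf mxD myD mx_ix my_ix mcolD mcolD mcol0 addr0 mulmxDr eq_shift.
by case: (_ == b); case: (_ == b'); rewrite /= ?mulr1 ?mulr0 ?mul0r.
Qed.

Lemma wf_iy b b' m u :
  wf b b' (m + iy r u)%MM =
  (A *m mcol (mxx m) == b)%:R * (A' *m mcol u == b' - A' *m mcol (myy m))%:R.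
Proof.
rewrite /wf mxD myD mx_iy my_iy mcolD mcolD mcol0 addr0 mulmxDr eq_shift.
by case: (_ == b); case: (_ == b'); rewrite /= ?mulr1 ?mulr0 ?mul0r.
Qed.

Lemma Lw_x b b' g f : toric_ideal A f -> Lw (wf b b') (g * incl_x s f) = 0.
Proof.
move=> Tf; rewrite incl_xE Lw_mul big1 // => m _.
under eq_bigr do rewrite wf_ix mulrCA -!mulrA.
rewrite -mulr_sumr -mulr_sumr.
have := Tf (b - A *m mcol (mxx m)); rewrite mimageE /Lw => ->.
by rewrite !mulr0.
Qed.

Lemma Lw_y b b' g f : toric_ideal A' f -> Lw (wf b b') (g * incl_y r f) = 0.
Proof.
move=> Tf; rewrite incl_yE Lw_mul big1 // => m _.
under eq_bigr do rewrite wf_iy mulrCA -!mulrA.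
rewrite -mulr_sumr -mulr_sumr.
have := Tf (b' - A' *m mcol (myy m)); rewrite mimageE /Lw => ->.
by rewrite !mulr0.
Qed.


Lemma Xsplit m : 'X_[m] = incl_x s 'X_[mxx m] * incl_y r 'X_[myy m] :> {mpoly K[r + s]}.
Proof. by rewrite incl_xX incl_yX -mpolyXD -mxyE. Qed.

Lemma core (T : Type) (t : seq T) (c : T -> K) (F : T -> 'X_{1..r+s}) :
  (forall b b', \sum_(i <- t) c i * wf b b' (F i) = 0) ->
  ideal_sum (toric_ideal A) (toric_ideal A') (\sum_(i <- t) c i *: 'X_[F i]).
Proof.
move: {2}(size t) (leqnn (size t)) => k; elim: k t => [|k IH] t.
  by case: t => // _ _; rewrite big_nil; exact: ideal0.
case: t => [|i0 t] Hs H; first by rewrite big_nil; exact: ideal0.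
set beta := A' *m mcol (myy (F i0)).
pose P i := A' *m mcol (myy (F i)) == beta.
rewrite (bigID P) /=; apply: idealD.
- pose v0 := myy (F i0).
  have E : forall i, P i -> c i *: 'X_[F i] =
     incl_y r 'X_[v0] * incl_x s (c i *: 'X_[mxx (F i)]) +
     (c i *: incl_x s 'X_[mxx (F i)]) * incl_y r ('X_[myy (F i)] - 'X_[v0]).
    move=> i _; rewrite Xsplit incl_xZ incl_yB -!mul_mpolyC.
    by rewrite mulrBr mulrA [incl_y r 'X_[v0] * _]mulrC addrC subrK.
  under eq_bigr => i Pi do rewrite (E i Pi).
  rewrite big_split /=; apply: idealD.
    rewrite -big_distrr -incl_x_sum /=; apply: ideal_x => b.
    rewrite mimageE Lw_sum.
    have := H b beta; rewrite (bigID P) /= [X in _ + X]big1 ?addr0; last first.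
      by move=> i /negbTE nP; rewrite /wf [_ == beta]nP andbF mulr0.
    move=> HH; rewrite -[in RHS]HH; apply: eq_bigr => i Pi.
    by rewrite LwZ LwX /wf; move: Pi; rewrite /P => ->; rewrite andbT.
  apply: ideal_big => i Pi; apply: ideal_y => b'.
  rewrite mimageE LwB !LwX.
  by move: Pi; rewrite /P => /eqP ->; rewrite subrr.
- rewrite -big_filter; apply: IH.
    rewrite size_filter /= {1}/P eqxx /= add0n.
    by apply: leq_trans (count_size _ _) _; rewrite -ltnS.
  move=> b b'; rewrite big_filter.
  have [Eb|Nb] := eqVneq b' beta.
    apply: big1 => i /negbTE nP; rewrite /wf Eb.
    by move: nP; rewrite /P => ->; rewrite andbF mulr0.
  have := H b b'; rewrite (bigID P) /= big1 ?add0r // => i Pi.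
  move: Pi; rewrite /P /wf => /eqP ->; rewrite [beta == _]eq_sym (negbTE Nb) andbF.
  by rewrite mulr0.
Qed.

End Main.

End Helpers.
Import Helpers.

Theorem corollary3p11 (K : fieldType) (d d' r s : nat)
  (A : 'M[int]_(d, r)) (A' : 'M[int]_(d', s)) (Q : {set 'I_r * 'I_s})
  (p : {mpoly K[#|Q|]}) :
  @qi_glue K r s (@toric_ideal K d r A) Q (@toric_ideal K d' s A') p <->
  @toric_ideal K (d + d') #|Q| (glue_mx A Q A') p.
Proof.
split.
- rewrite /qi_glue => -[n1 [n2 [f [g [e [h [If [Je Hp]]]]]]]] B.
  rewrite -(vsubmxK B) glue_Lw Hp LwD !Lw_sum.
  rewrite big1 => [|i _]; last exact: Lw_x.
  rewrite big1 => [|i _]; last exact: Lw_y.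
  by rewrite GRing.addr0.
- move=> Hp; rewrite /qi_glue phiQE; apply: core => b b'.
  by have := Hp (col_mx b b'); rewrite glue_Lw phiQE Lw_lin.
Qed.
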